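(* Let $X$ and $X^n$, $n\ge1$, be stochastic processes with sample paths in $D_{\mathbb{R}}[0,1]$. Assume that each $X^n$ is constant on each of the intervals $[0,2^{-n}),[2^{-n},2\cdot2^{-n}),\dots,[(2^n-1)2^{-n},1)$ and that $$\max_{d\in\mathcal{D}_n}|X^n_d-X_d|\to0\quad\text{almost surely as }n\to\infty,$$ where $\mathcal{D}_n=\{0,2^{-n},\dots,(2^n-1)2^{-n},1\}$. Then $X^n\to X$ almost surely in Skorokhod's $J_1$ topology.
   Context: $D_{\mathbb{R}}[0,1]$ is the space of real-valued càdlàg functions on $[0,1]$. Skorokhod's $J_1$ topology is induced by $d_{J_1}(x,y)=\inf_{\lambda\in\Lambda}\big(\sup_{t\in[0,1]}|\lambda(t)-t|+\sup_{t\in[0,1]}|x(\lambda(t))-y(t)|\big)$, where $\Lambda$ is the set of all increasing homeomorphisms $\lambda:[0,1]\to[0,1]$. *)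

(* Defs.v *)
From HB Require Import structures.
From mathcomp Require Import all_boot all_order all_algebra.
From mathcomp Require Import all_classical all_reals all_analysis.
Set Implicit Arguments. Unset Strict Implicit. Unset Printing Implicit Defensive.
Import Order.TTheory GRing.Theory Num.Theory.
Import numFieldNormedType.Exports.
Local Open Scope classical_set_scope.
Local Open Scope ring_scope.

(* A path x : R -> R is considered only on [0,1]. *)
Definition cadlag01 {R : realType} (x : R -> R) : Prop :=
  (forall t, 0 <= t < 1 -> x @ at_right t --> x t) /\
  (forall t, 0 < t <= 1 -> cvg (x @ at_left t)).

Definition incr_homeo01 {R : realType} (lam : R -> R) : Prop :=
  [/\ (forall t, 0 <= t <= 1 -> 0 <= lam t <= 1),
      {within `[0, 1]%classic, continuous lam},
      (forall s t, 0 <= s <= 1 -> 0 <= t <= 1 -> s < t -> lam s < lam t) &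
      exists mu : R -> R,
        [/\ (forall t, 0 <= t <= 1 -> 0 <= mu t <= 1),
            {within `[0, 1]%classic, continuous mu},
            (forall t, 0 <= t <= 1 -> mu (lam t) = t) &
            (forall t, 0 <= t <= 1 -> lam (mu t) = t)]].

Definition dJ1 {R : realType} (x y : R -> R) : \bar R :=
  ereal_inf [set (ereal_sup [set (`|lam t - t|)%:E | t in (`[0%R, 1%R]%classic : set R)]
                  + ereal_sup [set (`|x (lam t) - y t|)%:E | t in (`[0%R, 1%R]%classic : set R)])%E
            | lam in [set lam : R -> R | incr_homeo01 lam]].

Definition dyadic_max {R : realType} (n : nat) (f : R -> R) : R :=
  \big[Order.max/0]_(k < (2 ^ n).+1) `|f (k%:R / 2%:R ^+ n)|.

(* Main.v *)
Require Import Defs.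
From HB Require Import structures.
From mathcomp Require Import all_boot all_order all_algebra.
From mathcomp Require Import all_classical all_reals all_analysis.
Import Order.TTheory GRing.Theory Num.Theory.
Import numFieldNormedType.Exports.
Local Open Scope classical_set_scope.
Local Open Scope ring_scope.

From mathcomp Require Import ring lra.
Set Implicit Arguments. Unset Strict Implicit. Unset Printing Implicit Defensive.



Section PL.
Variable R : realType.
Implicit Types (a c : nat -> R) (t u : R).

Definition clamp (u : R) : R := Order.min 1 (Order.max 0 u).

Lemma clamp_id u : 0 <= u <= 1 -> clamp u = u.
Proof. by case/andP=> h0 h1; rewrite /clamp (max_r h0) (min_r h1). Qed.
Lemma clamp1 u : 1 <= u -> clamp u = 1.
Proof.
move=> h; rewrite /clamp max_r ?(le_trans _ h) // min_l //.
Qed.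
Lemma clamp0 u : u <= 0 -> clamp u = 0.
Proof. by move=> h; rewrite /clamp (max_l h) min_r. Qed.
Lemma clamp_le u v : u <= v -> clamp u <= clamp v.
Proof.
move=> h; rewrite /clamp le_min !ge_min lexx /=; apply/orP; right.
by rewrite ge_max !le_max lexx /= h !orbT.
Qed.

Definition inc m a := forall i, (i < m)%N -> a i < a i.+1.

Lemma inc_le m a i j : inc m a -> (i <= j <= m)%N -> a i <= a j.
Proof.
move=> ha /andP[]; elim: j => [|j IH]; first by rewrite leqn0 => /eqP->.
rewrite leq_eqVlt => /orP[/eqP-> //|hij] hj.
by apply: le_trans (IH hij (ltnW hj)) _; apply/ltW/ha.
Qed.

Lemma inc_lt m a i j : inc m a -> (i < j <= m)%N -> a i < a j.
Proof.
move=> ha /andP[hij hj]; apply: lt_le_trans (ha i _) (inc_le ha _).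
  exact: leq_trans hij hj.
by rewrite hij hj.
Qed.

Definition PL m a c t : R :=
  c 0%N + \sum_(i < m) (c i.+1 - c i) * clamp ((t - a i) / (a i.+1 - a i)).

Lemma PL_eq m a c j t : inc m a -> (j < m)%N -> a j <= t <= a j.+1 ->
  PL m a c t = c j + (c j.+1 - c j) * ((t - a j) / (a j.+1 - a j)).
Proof.
move=> ha hj /andP[h1 h2].
rewrite /PL -(big_mkord xpredT (fun i => (c i.+1 - c i) * clamp ((t - a i) / (a i.+1 - a i)))).
rewrite (@big_cat_nat _ _ _ j) ?(ltnW hj) //= (big_ltn hj) //=.
have gap i : (i < m)%N -> 0 < a i.+1 - a i by move=> hi; rewrite subr_gt0 ha.
rewrite (eq_big_nat _ _ (F2 := fun i => c i.+1 - c i)); last first.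
  move=> i /andP[_ hi]; rewrite clamp1 ?mulr1 //.
  have hi' : (i < m)%N by apply: ltn_trans hi hj.
  rewrite ler_pdivlMr ?gap // mul1r lerD2r.
  by apply: le_trans h1; apply: (inc_le ha); rewrite hi (ltnW hj).
rewrite telescope_sumr // (eq_big_nat _ _ (F2 := fun i => 0)); last first.
  move=> i /andP[hi1 hi2]; rewrite clamp0 ?mulr0 //.
  rewrite pmulr_lle0 ?invr_gt0 ?gap // subr_le0.
  by apply: le_trans h2 _; apply: (inc_le ha); rewrite hi1 (ltnW hi2).
rewrite big1 // addr0 clamp_id; first by rewrite addrA [c 0%N + _]addrC subrK.
apply/andP; split; first by apply: divr_ge0; [rewrite subr_ge0 | exact: ltW (gap _ hj)].
by rewrite ler_pdivrMr ?gap // mul1r lerD2r.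
Qed.


Lemma cont_sum n (F : nat -> R -> R) :
  (forall i, continuous (F i)) -> continuous (fun t => \sum_(i < n) F i t).
Proof.
move=> hF; elim: n => [|n IH].
  under eq_fun do rewrite big_ord0; exact: cst_continuous.
under eq_fun do rewrite big_ord_recr /=.
move=> x; apply: cvgD; [exact: IH | exact: hF].
Qed.

Lemma cont_clamp (a b : R) : continuous (fun t : R => clamp ((t - a) / b)).
Proof.
move=> x; rewrite /clamp.
apply: (@min_fun_continuous _ R R (fun _ => 1) (fun t => Order.max 0 ((t - a)/b))).
  exact: cst_continuous.
apply: (@max_fun_continuous _ R R (fun _ => 0) (fun t => ((t - a)/b))).
  exact: cst_continuous.
move=> y; apply: cvgM; last exact: cvg_cst.
apply: cvgB; [exact: cvg_id | exact: cvg_cst].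
Qed.

Lemma PL_cont m a c : continuous (PL m a c).
Proof.
move=> x; apply: cvgD; first exact: cvg_cst.
apply: (@cont_sum m (fun i t => (c i.+1 - c i) * clamp ((t - a i) / (a i.+1 - a i)))).
move=> i y; apply: cvgM; first exact: cvg_cst.
exact: cont_clamp.
Qed.

Lemma m_gt0 m a : a 0%N = 0 -> a m = 1 -> (0 < m)%N.
Proof. by case: m => // -> /eqP; rewrite eq_sym oner_eq0. Qed.

Lemma locate m a s : a 0%N = 0 -> a m = 1 -> 0 <= s < 1 ->
  exists j, [/\ (j < m)%N, a j <= s & s < a j.+1].
Proof.
move=> a0 am /andP[s0 s1]; have m0 := m_gt0 a0 am.
have ex : exists j, s < a j.+1 by exists m.-1; rewrite prednK // am.
case: (ex_minnP ex) => j hj hmin; exists j; split => //.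
  have := hmin m.-1; rewrite prednK // am => /(_ s1).
  by move=> h; rewrite -ltnS prednK in h.
case: j hj hmin => [|j] hj hmin; first by rewrite a0.
by rewrite leNgt; apply/negP => /hmin; rewrite ltnn.
Qed.

Lemma locate_cl m a t : inc m a -> a 0%N = 0 -> a m = 1 -> 0 <= t <= 1 ->
  exists j, [/\ (j < m)%N, a j <= t & t <= a j.+1].
Proof.
move=> ha a0 am /andP[t0 t1]; have m0 := m_gt0 a0 am.
case: (ltrP t 1) => ht.
  have := @locate m a t a0 am; rewrite t0 ht => /(_ isT) [j [hj h1 h2]].
  by exists j; split => //; apply: ltW.
exists m.-1; rewrite prednK // am; split => //.
apply: le_trans ht; rewrite -am; apply: (inc_le ha).
by rewrite leq_pred leqnn.
Qed.


Lemma PL_mono m a c s t : inc m a -> inc m c -> s <= t -> PL m a c s <= PL m a c t.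
Proof.
move=> ha hc st; rewrite /PL lerD2l; apply: ler_sum => i _.
apply: ler_wpM2l; first by rewrite subr_ge0 ltW // hc.
by apply: clamp_le; rewrite ler_pM2r ?invr_gt0 ?subr_gt0 ?ha // lerD2r.
Qed.

Lemma PL_node m a c j : inc m a -> a 0%N = 0 -> a m = 1 -> (j <= m)%N ->
  PL m a c (a j) = c j.
Proof.
move=> ha a0 am hjm; have m0 := m_gt0 a0 am.
case: (ltnP j m) => hj; last first.
  have -> : j = m by apply/eqP; rewrite eqn_leq hjm hj.
  have hm1 : (m.-1 < m)%N by case: m m0 {ha am hjm hj}.
  have := @PL_eq m a c m.-1 (a m) ha hm1; rewrite (prednK m0) => ->.
    rewrite divff; first by rewrite mulr1 addrC subrK.
    rewrite subr_eq0 gt_eqF //.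
    by have := ha m.-1 hm1; rewrite (prednK m0).
  rewrite lexx andbT; apply: (inc_le ha); by rewrite leq_pred leqnn.
rewrite (@PL_eq m a c j) ?lexx //=; last by rewrite ltW ?ha.
by rewrite subrr mul0r mulr0 addr0.
Qed.

Lemma PL_strict m a c s t : inc m a -> inc m c -> a 0%N = 0 -> a m = 1 ->
  0 <= s -> t <= 1 -> s < t -> PL m a c s < PL m a c t.
Proof.
move=> ha hc a0 am s0 t1 st.
have := @locate m a s a0 am; rewrite s0 (lt_le_trans st t1) => /(_ isT) [j [hj h1 h2]].
set r := Order.min t (a j.+1).
have sr : s < r by rewrite lt_min st h2.
have rt : r <= t by rewrite ge_min lexx.
have r2 : r <= a j.+1 by rewrite ge_min lexx orbT.
apply: lt_le_trans (PL_mono ha hc rt).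
rewrite (@PL_eq m a c j) ?h1 ?(ltW h2) // (@PL_eq m a c j); last first.
  by rewrite r2 andbT (le_trans h1 (ltW sr)).
  by [].
  by [].
rewrite ltrD2l ltr_pM2l ?subr_gt0 ?hc // ltr_pM2r ?invr_gt0 ?subr_gt0 ?ha //.
by rewrite ltrD2r.
Qed.

Lemma PL_range m a c t : inc m a -> inc m c -> a 0%N = 0 -> a m = 1 ->
  c 0%N = 0 -> c m = 1 -> 0 <= t <= 1 -> 0 <= PL m a c t <= 1.
Proof.
move=> ha hc a0 am c0 cm /andP[t0 t1].
have e0 := @PL_node m a c 0 ha a0 am (leq0n m); rewrite a0 c0 in e0.
have e1 := @PL_node m a c m ha a0 am (leqnn m); rewrite am cm in e1.
have := PL_mono (c:=c) ha hc t0; rewrite e0 => ->.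
by have := PL_mono (c:=c) ha hc t1; rewrite e1.
Qed.

Lemma PL_inv m a c t : inc m a -> inc m c -> a 0%N = 0 -> a m = 1 ->
  c 0%N = 0 -> c m = 1 -> 0 <= t <= 1 -> PL m c a (PL m a c t) = t.
Proof.
move=> ha hc a0 am c0 cm ht.
have [j [hj h1 h2]] := locate_cl ha a0 am ht.
have ga : 0 < a j.+1 - a j by rewrite subr_gt0 ha.
have gc : 0 < c j.+1 - c j by rewrite subr_gt0 hc.
have th0 : 0 <= (t - a j) / (a j.+1 - a j).
  by apply: divr_ge0; [rewrite subr_ge0 | exact: ltW ga].
have th1 : (t - a j) / (a j.+1 - a j) <= 1 by rewrite ler_pdivrMr // mul1r lerD2r.
rewrite (@PL_eq m a c j) // ?h1 ?h2 // (@PL_eq m c a j) //.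
  by field; rewrite (gt_eqF gc) (gt_eqF ga).
rewrite lerDl mulr_ge0 ?(ltW gc) //=.
rewrite -lerBrDl; rewrite -[X in _ <= X]mulr1.
by rewrite ler_wpM2l // ltW.
Qed.

Lemma conv_bound (x0 x1 y0 y1 th del : R) : 0 <= th <= 1 ->
  `|y0 - x0| <= del -> `|y1 - x1| <= del ->
  `|(y0 + (y1 - y0) * th) - (x0 + (x1 - x0) * th)| <= del.
Proof.
move=> /andP[th0 th1] h0 h1.
have -> : (y0 + (y1 - y0) * th) - (x0 + (x1 - x0) * th) =
          (y0 - x0) * (1 - th) + (y1 - x1) * th by ring.
apply: le_trans (ler_normD _ _) _.
rewrite !normrM (ger0_norm th0) [`|1 - th|]ger0_norm ?subr_ge0 //.
have -> : del = del * (1 - th) + del * th by ring.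
by apply: lerD; apply: ler_pM => //; rewrite ?subr_ge0.
Qed.

Lemma PL_dist m a c t del : inc m a -> a 0%N = 0 -> a m = 1 ->
  (forall i, (i <= m)%N -> `|c i - a i| <= del) ->
  0 <= t <= 1 -> `|PL m a c t - t| <= del.
Proof.
move=> ha a0 am hd ht.
have [j [hj h1 h2]] := locate_cl ha a0 am ht.
have ga : 0 < a j.+1 - a j by rewrite subr_gt0 ha.
have et : t = a j + (a j.+1 - a j) * ((t - a j) / (a j.+1 - a j)).
  by field; rewrite (gt_eqF ga).
rewrite (@PL_eq m a c j) ?h1 ?h2 // [X in `|_ - X|]et.
apply: conv_bound; [|exact: hd (ltnW hj)|exact: hd hj].
apply/andP; split; first by apply: divr_ge0; [rewrite subr_ge0 | exact: ltW ga].
by rewrite ler_pdivrMr // mul1r lerD2r.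
Qed.

Lemma PL_homeo m a c : inc m a -> inc m c -> a 0%N = 0 -> a m = 1 ->
  c 0%N = 0 -> c m = 1 -> incr_homeo01 (PL m a c).
Proof.
move=> ha hc a0 am c0 cm; split.
- by move=> t; apply: PL_range.
- exact/continuous_subspaceT/PL_cont.
- move=> s t /andP[s0 _] /andP[_ t1]; exact: PL_strict.
exists (PL m c a); split.
- by move=> t; apply: PL_range.
- exact/continuous_subspaceT/PL_cont.
- by move=> t; apply: PL_inv.
- by move=> t; apply: PL_inv.
Qed.

End PL.



Section Part.
Variable R : realType.

Lemma near_left_ex (s : R) (P : R -> Prop) :
  (\forall u \near s^'-, P u) -> exists2 e, 0 < e & forall u, s - e < u < s -> P u.
Proof.
move=> /nbhs_ballP[e e0 H]; exists e => // u /andP[h1 h2]; apply: H => //.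
rewrite /ball /= ltr_norml; apply/andP; split; lra.
Qed.
Lemma near_right_ex (s : R) (P : R -> Prop) :
  (\forall u \near s^'+, P u) -> exists2 e, 0 < e & forall u, s < u < s + e -> P u.
Proof.
move=> /nbhs_ballP[e e0 H]; exists e => // u /andP[h1 h2]; apply: H => //.
rewrite /ball /= ltr_norml; apply/andP; split; lra.
Qed.

Variables (x : R -> R) (eps : R).

Definition good (s : R) := exists m (a : nat -> R),
  [/\ a 0%N = 0, a m = s, inc m a &
   forall i, (i < m)%N -> forall u v, a i <= u < a i.+1 -> a i <= v < a i.+1 ->
     `|x u - x v| <= eps].

Lemma good0 : good 0.
Proof. by exists 0%N, (fun _ => 0); split. Qed.

Lemma good_ext s s' : good s -> s < s' ->
  (forall u v, s <= u < s' -> s <= v < s' -> `|x u - x v| <= eps) -> good s'.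
Proof.
move=> [m [a [a0 am ha hx]]] ss' hs.
exists m.+1, (fun i => if (i <= m)%N then a i else s'); split => //.
- by rewrite ltnn.
- move=> i hi; rewrite ltnS in hi; rewrite hi.
  case: (ltnP i m) => him; first exact: ha.
  have -> : i = m by apply/eqP; rewrite eqn_leq hi him.
  by rewrite am.
- move=> i hi u v; rewrite ltnS in hi; rewrite hi.
  case: (ltnP i m) => him; first exact: hx.
  have -> : i = m by apply/eqP; rewrite eqn_leq hi him.
  by rewrite am; apply: hs.
Qed.

Lemma partition : 0 < eps -> cadlag01 x -> good 1.
Proof.
move=> e0 [xr xl].
pose S := [set s | 0 <= s <= 1 /\ good s].
have S0 : S 0 by split; [rewrite lexx ler01 | exact: good0].
have ub1 : ubound S 1 by move=> s [/andP[_ ]].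
have hS : has_sup S by split; [exists 0 | exists 1].
set sg := sup S.
have sg0 : 0 <= sg by apply: sup_upper_bound.
have sg1 : sg <= 1 by apply: ge_sup => //; exists 0.
have e2 : 0 < eps / 2 by rewrite divr_gt0.
have gsg : good sg.
  have [->|sgp] := eqVneq sg 0; first exact: good0.
  have {}sgp : 0 < sg by rewrite lt0r sgp.
  have := xl sg; rewrite sgp sg1 => /(_ isT) /cvg_ex [L HL].
  move/cvgrPdist_lt: HL => /(_ _ e2) /near_left_ex [eta eta0 Heta].
  have [s [/andP[s0 s1] gs] hs] := sup_adherent eta0 hS.
  have ssg : s <= sg by apply: (sup_upper_bound hS); split => //; rewrite s0 s1.
  have [esg|ssg'] := eqVneq s sg; first by rewrite -esg.
  have {}ssg' : s < sg by rewrite lt_neqAle ssg' ssg.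
  apply: (good_ext gs ssg') => u v /andP[u1 u2] /andP[v1 v2].
  have hu : `|L - x u| < eps / 2 by apply: Heta; rewrite u2 andbT; apply: lt_le_trans hs u1.
  have hv : `|L - x v| < eps / 2 by apply: Heta; rewrite v2 andbT; apply: lt_le_trans hs v1.
  have -> : x u - x v = (L - x v) - (L - x u) by ring.
  apply: le_trans (ler_normB _ _) _.
  by rewrite [eps]splitr; apply: ltW; apply: ltrD.
have sgeq : sg = 1.
  apply/eqP; rewrite eq_le sg1 /=; rewrite leNgt; apply/negP => sglt.
  have := xr sg; rewrite sg0 sglt => /(_ isT).
  move/cvgrPdist_lt => /(_ _ e2) /near_right_ex [eta eta0 Heta].
  pose s' := Order.min (sg + eta / 2) 1.
  have sgs' : sg < s' by rewrite lt_min sglt ltrDl divr_gt0.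
  have hu w : sg <= w < s' -> `|x sg - x w| < eps / 2.
    move=> /andP[w1 w2]; have [->|wne] := eqVneq w sg; first by rewrite subrr normr0.
    apply: Heta; rewrite lt_neqAle eq_sym wne w1 /=.
    apply: lt_le_trans w2 _; rewrite ge_min; apply/orP; left.
    by rewrite lerD2l ler_pdivrMr // ler_pMr // ler1n.
  have gs' : good s'.
    apply: (good_ext gsg sgs') => u v hu' hv'.
    have -> : x u - x v = (x sg - x v) - (x sg - x u) by ring.
    apply: le_trans (ler_normB _ _) _.
    by rewrite [eps]splitr; apply: ltW; apply: ltrD; apply: hu.
  have : S s' by split => //; rewrite (ltW (le_lt_trans sg0 sgs')) ge_min lexx orbT.
  by move/(sup_upper_bound hS); rewrite leNgt sgs'.
by rewrite -sgeq.
Qed.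

End Part.



Section Dy.
Variable R : realType.

Lemma bigmax_ge N (F : nat -> R) k : (k < N)%N ->
  F k <= \big[Order.max/0]_(i < N) F i.
Proof.
elim: N F k => [//|N IH] F k hk; rewrite big_ord_recl /= le_max.
case: k hk => [|k] hk; first by rewrite lexx.
apply/orP; right.
rewrite (eq_bigr (fun i : 'I_N => F i.+1)); first exact: (IH (fun i => F i.+1)).
by move=> i _.
Qed.

Lemma dyadic_ge n (f : R -> R) k : (k <= 2 ^ n)%N ->
  `|f (k%:R / 2%:R ^+ n)| <= dyadic_max n f.
Proof.
move=> hk; rewrite /dyadic_max.
exact: (@bigmax_ge (2 ^ n).+1 (fun k => `|f (k%:R / 2%:R ^+ n)|) k).
Qed.

Lemma p_gt0 n : 0 < (2%:R ^+ n : R).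
Proof. by rewrite exprn_gt0 // ltr0n. Qed.

Lemma dfloor n (y : R) : 0 <= y < 1 ->
  exists k, [/\ (k < 2 ^ n)%N, k%:R <= y * 2%:R ^+ n & y * 2%:R ^+ n < k.+1%:R].
Proof.
move=> /andP[y0 y1].
have ex : exists k, y * 2%:R ^+ n < k.+1%:R.
  exists (2 ^ n).-1; rewrite prednK ?expn_gt0 // natrX.
  by rewrite -[X in _ < X]mul1r ltr_pM2r ?p_gt0.
case: (ex_minnP ex) => k hk hmin; exists k; split => //.
  have := hmin (2 ^ n).-1; rewrite prednK ?expn_gt0 // natrX.
  rewrite -[X in _ < X -> _]mul1r ltr_pM2r ?p_gt0 // => /(_ y1) h.
  by rewrite -ltnS prednK ?expn_gt0 in h.
case: k hk hmin => [|k] hk hmin; first by rewrite mulr_ge0 // ltW ?p_gt0.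
by rewrite leNgt; apply/negP => /hmin; rewrite ltnn.
Qed.

Lemma dceil n (t : R) : exists K, 0 <= t <= 1 ->
  [/\ (K <= 2 ^ n)%N, t * 2%:R ^+ n <= K%:R, K%:R < t * 2%:R ^+ n + 1 & (t = 0 -> K = 0%N)].
Proof.
case: (boolP (0 <= t <= 1)) => [/andP[t0 t1]|]; last by exists 0%N.
have ex : exists K, t * 2%:R ^+ n <= K%:R.
  by exists (2 ^ n)%N; rewrite natrX -[X in _ <= X]mul1r ler_pM2r ?p_gt0.
case: (ex_minnP ex) => K hK hmin; exists K => _; split => //.
- apply: hmin; rewrite natrX -[X in _ <= X]mul1r ler_pM2r ?p_gt0 //.
- case: K hK hmin => [|K] hK hmin; first by rewrite ltr_pwDr ?mulr_ge0 // ltW ?p_gt0.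
  rewrite -ltrBlDr -natr1 addrK ltNge; apply/negP => /hmin; rewrite ltnn.
  by [].
- by move=> t0'; apply/eqP; rewrite -leqn0; apply: hmin; rewrite t0' mul0r.
Qed.

End Dy.



Section Main.
Variable R : realType.

Lemma main_bound (x xn : R -> R) (n : nat) (eps : R) (m : nat) (a : nat -> R) :
  (0 < n)%N ->
  (forall k, (k < 2 ^ n)%N -> forall s t,
     k%:R / 2%:R ^+ n <= s < k.+1%:R / 2%:R ^+ n ->
     k%:R / 2%:R ^+ n <= t < k.+1%:R / 2%:R ^+ n -> xn s = xn t) ->
  0 <= eps ->
  a 0%N = 0 -> a m = 1 -> inc m a ->
  (forall i, (i < m)%N -> forall u v, a i <= u < a i.+1 -> a i <= v < a i.+1 ->
     `|x u - x v| <= eps) ->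
  (forall i, (i < m)%N -> (2%:R ^+ n)^-1 < a i.+1 - a i) ->
  (dJ1 xn x <= ((2%:R ^+ n)^-1 + (dyadic_max n (fun u => xn u - x u) + eps))%:E)%E.
Proof.
move=> n0 hconst eps0 a0 am ha hosc hgap.
set p : R := 2%:R ^+ n.
have p0 : 0 < p by apply: p_gt0.
have [Kf hK] := choice (@dceil R n).
pose c i := (Kf (a i))%:R / p.
have a01 i : (i <= m)%N -> 0 <= a i <= 1.
  by move=> hi; rewrite -a0 -am !(inc_le ha) //= hi leqnn.

have ac i : (i <= m)%N -> a i <= c i.
  move=> hi; have [_ h _ _] := hK _ (a01 i hi).
  by rewrite /c ler_pdivlMr.
have ca i : (i <= m)%N -> c i < a i + p^-1.
  move=> hi; have [_ _ h _] := hK _ (a01 i hi).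
  by rewrite /c ltr_pdivrMr // mulrDl mulVf ?gt_eqF.
have c0 : c 0%N = 0.
  have [_ _ _ h] := hK _ (a01 0%N (leq0n m)).
  by rewrite /c h // mul0r.
have cm : c m = 1.
  have [h1 h2 _ _] := hK _ (a01 m (leqnn m)).
  move: h1 h2; rewrite am mul1r /p -natrX ler_nat => h1 h2.
  rewrite /c am; have -> : Kf 1 = (2 ^ n)%N by apply/eqP; rewrite eqn_leq h2 h1.
  by rewrite /p -natrX divff // pnatr_eq0 expn_eq0.
have hc : inc m c.
  move=> i hi; apply: lt_le_trans (ca i (ltnW hi)) _.
  apply: le_trans (ac _ hi).
  by have := hgap i hi; lra.
have hom := PL_homeo ha hc a0 am c0 cm.
set lam := PL m a c.
rewrite /dJ1.
apply: le_trans; first by apply: ereal_inf_lbound; exists lam.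
rewrite EFinD; apply: leeD.
  apply: ge_ereal_sup => _ [t ht <-]; rewrite lee_fin.
  move: ht; rewrite /= in_itv /= => ht.
  apply: PL_dist => // i hi.
  rewrite ger0_norm ?subr_ge0 ?ac //.
  by have := ca i hi; lra.
apply: ge_ereal_sup => _ [t ht <-]; rewrite lee_fin.
move: ht; rewrite /= in_itv /= => /andP[t0 t1].
set del := dyadic_max n (fun u => xn u - x u).
have hdel k : (k <= 2 ^ n)%N -> `|xn (k%:R / p) - x (k%:R / p)| <= del.
  by move=> hk; apply: (dyadic_ge (fun u => xn u - x u)).
case: (ltrP t 1) => tlt; last first.
  have -> : t = 1 by apply/eqP; rewrite eq_le t1 tlt.
  have -> : lam 1 = 1 by rewrite /lam -am PL_node // cm.
  apply: le_trans (_ : del <= _); last by rewrite lerDl.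
  by have := hdel _ (leqnn (2 ^ n)); rewrite /p -natrX divff // pnatr_eq0 expn_eq0.
have [i [hi ait tai]] := @locate R m a t a0 am (ltac:(by rewrite t0 tlt)).
have nodei : lam (a i) = c i by rewrite /lam PL_node // ltnW.
have nodei1 : lam (a i.+1) = c i.+1 by rewrite /lam PL_node.
set y := lam t.
have cy : c i <= y by rewrite -nodei /y /lam PL_mono.
have yc : y < c i.+1.
  rewrite -nodei1 /y /lam PL_strict //.
  by have /andP[] := a01 i.+1 hi.
have y0 : 0 <= y.
  apply: le_trans cy; apply: le_trans (ac _ (ltnW hi)).
  by have /andP[] := a01 i (ltnW hi).
have y1 : y < 1.
  apply: lt_le_trans yc _; rewrite -cm; apply: (inc_le hc).
  by rewrite hi leqnn.
have [k [hk k1 k2]] := dfloor n (ltac:(by rewrite y0 y1) : 0 <= y < 1).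
rewrite -/p in k1 k2.
have Kik : (Kf (a i) <= k)%N.
  rewrite -ltnS -(ltr_nat R); apply: le_lt_trans k2.
  by rewrite -ler_pdivrMr.
have kK : (k < Kf (a i.+1))%N.
  rewrite -(ltr_nat R); apply: le_lt_trans k1 _.
  by rewrite -ltr_pdivlMr.
set d := k%:R / p.
have aid : a i <= d.
  apply: le_trans (ac _ (ltnW hi)) _.
  by rewrite /c /d ler_pM2r ?invr_gt0 // ler_nat.
have dai : d < a i.+1.
  have := ca _ hi; rewrite /c /d => h.
  have h2 : (k.+1%:R : R) <= (Kf (a i.+1))%:R by rewrite ler_nat.
  have h3 : (k.+1%:R : R) / p <= (Kf (a i.+1))%:R / p by rewrite ler_pM2r ?invr_gt0.
  have h4 : (k.+1%:R : R) / p = k%:R / p + p^-1 by rewrite -natr1 mulrDl mul1r.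
  lra.
have hdy : xn y = xn d.
  apply: (hconst k hk).
    rewrite ler_pdivrMr // k1 /= ltr_pdivlMr //.
  rewrite lexx /= ltr_pM2r ?invr_gt0 // ltr_nat.
  by [].
rewrite hdy.
have -> : xn d - x t = (xn d - x d) + (x d - x t) by ring.
apply: le_trans (ler_normD _ _) _.
apply: lerD; first exact: hdel (ltnW hk).
apply: (hosc i hi); first by rewrite aid dai.
by rewrite ait tai.
Qed.

End Main.



Section Fin.
Variable R : realType.

Lemma dJ1_ge0 (x y : R -> R) : (0 <= dJ1 x y)%E.
Proof.
apply: le_ereal_inf_tmp => _ [lam _ <-].
apply: adde_ge0; apply: le_ereal_sup_tmp.
  exists (`|lam 0 - 0|)%:E; last by rewrite lee_fin.
  by exists 0 => //; rewrite /= in_itv /= lexx ler01.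
exists (`|x (lam 0) - y 0|)%:E; last by rewrite lee_fin.
by exists 0 => //; rewrite /= in_itv /= lexx ler01.
Qed.

Lemma pow_small (h : R) : 0 < h -> exists N, forall n, (N <= n)%N -> (2%:R ^+ n : R)^-1 < h.
Proof.
move=> h0; have hi : 0 <= h^-1 by rewrite invr_ge0 ltW.
have hb := archi_boundP hi.
exists (Num.Def.archi_bound h^-1) => n hn.
have h1 : h^-1 < 2%:R ^+ n.
  apply: lt_le_trans hb _; rewrite -natrX ler_nat.
  by apply: leq_trans hn (ltnW (ltn_expl _ _)).
rewrite -div1r ltr_pdivrMr ?p_gt0 //.
move: h1; rewrite -div1r ltr_pdivrMr // => h1.
by rewrite mulrC.
Qed.

Lemma gap m (a : nat -> R) : inc m a ->
  exists2 g, 0 < g & forall i, (i < m)%N -> g <= a i.+1 - a i.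
Proof.
elim: m => [|m IH] ha; first by exists 1.
have [|g g0 hg] := IH; first by move=> i hi; apply: ha; apply: ltnW.
exists (Order.min g (a m.+1 - a m)); first by rewrite lt_min g0 subr_gt0 ha.
move=> i; rewrite ltnS leq_eqVlt => /orP[/eqP->|hi]; first by rewrite ge_min lexx orbT.
by rewrite ge_min hg.
Qed.

Lemma det (x : R -> R) (xn : nat -> R -> R) :
  cadlag01 x ->
  (forall n, (0 < n)%N -> forall k, (k < 2 ^ n)%N -> forall s t,
     k%:R / 2%:R ^+ n <= s < k.+1%:R / 2%:R ^+ n ->
     k%:R / 2%:R ^+ n <= t < k.+1%:R / 2%:R ^+ n -> xn n s = xn n t) ->
  (fun n => dyadic_max n (fun u => xn n u - x u)) @ \oo --> 0 ->
  (fun n => dJ1 (xn n) x) @ \oo --> 0%E.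
Proof.
move=> hx hc hd.
have key e : 0 < e -> exists N, forall n, (N <= n)%N -> (dJ1 (xn n) x <= e%:E)%E.
  move=> e0; set eps := e / 3%:R.
  have eps0 : 0 < eps by rewrite divr_gt0.
  have [m [a [a0 am ha hosc]]] := partition eps0 hx.
  have [g g0 hg] := gap ha.
  have hmin : 0 < Order.min g eps by rewrite lt_min g0 eps0.
  have [N1 hN1] := pow_small hmin.
  move/cvgrPdist_le: hd => /(_ eps eps0) [N2 _ hN2].
  exists (maxn 1 (maxn N1 N2)) => n; rewrite !geq_max => /and3P[n1 nN1 nN2].
  have hp := hN1 n nN1; rewrite lt_min in hp; case/andP: hp => hpg hpe.
  apply: le_trans (@main_bound R x (xn n) n eps m a n1 (hc n n1) (ltW eps0) a0 am ha hosc _) _.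
    by move=> i hi; apply: lt_le_trans hpg (hg i hi).
  rewrite lee_fin.
  have := hN2 n nN2; rewrite /= sub0r normrN => hdn.
  have hdn' := le_trans (ler_norm _) hdn.
  have -> : e = eps + (eps + eps) by rewrite /eps; field.
  by apply: lerD; [apply: ltW | apply: lerD].
have fin : \forall n \near \oo, dJ1 (xn n) x \is a fin_num.
  have [N hN] := key 1 ltr01; exists N => // n /= hn.
  rewrite ge0_fin_numE ?dJ1_ge0 //; apply: le_lt_trans (hN n hn) _.
  exact: ltey.
apply: cvg_EFin => //.
apply/cvgrPdist_le => e e0.
have [N hN] := key e e0; exists N => // n /= hn.
rewrite sub0r normrN ger0_norm ?fine_ge0 ?dJ1_ge0 //.
have := hN n hn.
have fn : dJ1 (xn n) x \is a fin_num.
  rewrite ge0_fin_numE ?dJ1_ge0 //; apply: le_lt_trans (hN n hn) _.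
  exact: ltey.
by rewrite -lee_fin fineK.
Qed.

End Fin.

Unset Implicit Arguments.
Set Strict Implicit.

Theorem mainTheorem7 (R : realType) (d : measure_display) (T : measurableType d)
  (P : probability T R) (X : T -> R -> R) (Xn : nat -> T -> R -> R) :
  (forall t, measurable_fun setT (fun w => X w t)) ->
  (forall n t, measurable_fun setT (fun w => Xn n w t)) ->
  (forall w, cadlag01 (X w)) ->
  (forall n w, cadlag01 (Xn n w)) ->
  (forall n, (0 < n)%N -> forall w (k : nat), (k < 2 ^ n)%N ->
     forall s t, k%:R / 2%:R ^+ n <= s < k.+1%:R / 2%:R ^+ n ->
                 k%:R / 2%:R ^+ n <= t < k.+1%:R / 2%:R ^+ n ->
                 Xn n w s = Xn n w t) ->
  {ae P, forall w, (fun n => dyadic_max n (fun u => Xn n w u - X w u)) @ \oo --> 0} ->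
  {ae P, forall w, (fun n => dJ1 (Xn n w) (X w)) @ \oo --> 0%E}.
Proof.
move=> _ _ hX _ hc hae.
apply: filterS hae => w hw.
exact: (det (hX w) (fun n n0 => hc n n0 w) hw).
Qed.
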